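(* Let $n\ge 2$. There exists a bijection from $T_n$ to $P_n$, where $T_n$ is the set of labeled threshold graphs on the vertex set $\{1,\dots,n\}$ and $P_n=\{(\pi,A):\pi\in\mathcal{S}_n^+,\ A\subseteq\mathrm{Asc}(\pi)\}$.
   Context: A threshold graph is a graph obtainable from the empty graph by repeatedly adding a new vertex that is either adjacent to all existing vertices or to none; labeled threshold graphs on $n$ vertices have vertex set $\{1,\dots,n\}$ and are distinguished by their edge sets. $\mathcal{S}_n$ is the set of permutations of $\{1,\dots,n\}$ in one-line notation $\pi=\pi_1\cdots\pi_n$. A position $i$ with $1\le i\le n-1$ is an ascent of $\pi$ if $\pi_i<\pi_{i+1}$, and $\mathrm{Asc}(\pi)$ is the set of ascents of $\pi$. For $n\ge 2$, $\mathcal{S}_n^+$ is the set of $\pi\in\mathcal{S}_n$ with $\pi_1<\pi_2$. *)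

(* Defs.v *)
(* Vertices/positions {1,...,n} are encoded 0-based as 'I_n. *)
From mathcomp Require Import all_boot all_order all_fingroup.
Set Implicit Arguments.
Unset Strict Implicit.
Unset Printing Implicit Defensive.

Definition simple_graph (n : nat) (E : {set {set 'I_n}}) : Prop :=
  forall e, e \in E -> #|e| = 2.

(* Threshold graph: built from the empty graph by adding vertices
   sigma 0, sigma 1, ..., sigma (n-1) in order; when sigma j is added it is
   adjacent to all previously added vertices if d j, and to none otherwise. *)
Definition threshold (n : nat) (E : {set {set 'I_n}}) : Prop :=
  exists (sigma : 'S_n) (d : 'I_n -> bool),
    E = [set [set sigma p.1; sigma p.2] | p : 'I_n * 'I_n & (p.1 < p.2) && d p.2].

Definition threshold_graph (n : nat) : Type :=
  {E : {set {set 'I_n}} | simple_graph E /\ threshold E}.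

(* 0-based position i (i.e. 1-based position i+1) is an ascent of pi if
   i+1 < n and pi_i < pi_{i+1}. *)
Definition is_ascent (n : nat) (pi : 'S_n) (i : 'I_n) : bool :=
  [exists j : 'I_n, (val j == i.+1) && (pi i < pi j)].

Definition Asc (n : nat) (pi : 'S_n) : {set 'I_n} := [set i | is_ascent pi i].

Definition Splus (n : nat) (pi : 'S_n) : Prop :=
  exists i j : 'I_n, val i = 0 /\ val j = 1 /\ pi i < pi j.

Definition Pn (n : nat) : Type :=
  {p : 'S_n * {set 'I_n} | Splus p.1 /\ p.2 \subset Asc p.1}.

(* Main.v *)
Require Import Defs.
From mathcomp Require Import all_boot all_order all_fingroup.
From mathcomp Require Import zify.
From Stdlib Require Import ProofIrrelevance FunctionalExtensionality IndefiniteDescription.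
Set Implicit Arguments.
Unset Strict Implicit.
Unset Printing Implicit Defensive.

Section S.
Variable n : nat.
Local Notation m := n.+2.

Definition Eof (s : 'S_m) (d : 'I_m -> bool) : {set {set 'I_m}} :=
  [set [set s p.1; s p.2] | p : 'I_m * 'I_m & (p.1 < p.2) && d p.2].

Definition maxo (a b : 'I_m) := if a < b then b else a.

Lemma EofP (s : 'S_m) (d : 'I_m -> bool) (a b : 'I_m) : a != b -> ([set s a; s b] \in Eof s d) = d (maxo a b).
Proof.
move=> nab; apply/imsetP/idP.
- case=> [[p1 p2]]; rewrite inE /= => /andP[lt12 dp2] eq.
  have ha : s a \in [set s p1; s p2] by rewrite -eq !inE eqxx.
  have hb : s b \in [set s p1; s p2] by rewrite -eq !inE eqxx orbT.
  rewrite !inE !(inj_eq perm_inj) in ha hb.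
  rewrite /maxo.
  case/orP: ha => /eqP ea; case/orP: hb => /eqP eb; subst.
  + by rewrite eqxx in nab.
  + by rewrite lt12.
  + by rewrite ltnNge (ltnW lt12).
  + by rewrite eqxx in nab.
- rewrite /maxo => dm. case: (ltngtP a b) => h.
  + rewrite h in dm; exists (a, b) => //; by rewrite inE /= h.
  + rewrite ltnNge (ltnW h) /= in dm; exists (b, a); first by rewrite inE /= h.
    by rewrite /= setUC.
  + by rewrite (val_inj h) eqxx in nab.
Qed.

Lemma mem_Eof (s : 'S_m) (d : 'I_m -> bool) e : e \in Eof s d -> exists a b, [/\ a != b, e = [set s a; s b] & d (maxo a b)].
Proof.
case/imsetP=> [[p1 p2]]; rewrite inE /= => /andP[lt12 dp2] ->.
exists p1, p2; split => //; first by rewrite neq_ltn lt12.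
by rewrite /maxo lt12.
Qed.

Definition NF (s : 'S_m) (d : 'I_m -> bool) :=
  (forall i j : 'I_m, val i = 0 -> val j = 1 -> d i = d j) /\
  (forall i j : 'I_m, val j = (val i).+1 -> d i = d j -> s i < s j).

Lemma NF_chain (s : 'S_m) (d : 'I_m -> bool) b (p : 'I_m) : NF s d -> forall k : 'I_m, p < k ->
  (forall r : 'I_m, p <= r <= k -> d r = b) -> s p < s k.
Proof.
move=> [_ H2].
suff H : forall k (hk : k < m), p < k -> (forall r : 'I_m, p <= r <= k -> d r = b) ->
   s p < s (Ordinal hk).
  move=> k; have := H k (ltn_ord k).
  by rewrite (_ : Ordinal _ = k) //; apply: val_inj.
elim=> [|k IH] hk // ltpk Hr.
have hk' : k < m by apply: ltnW.
have Hs : s (Ordinal hk') < s (Ordinal hk).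
  apply: H2 => //=.
  by rewrite (Hr (Ordinal hk')) ?(Hr (Ordinal hk)) //= ?leqnn ?andbT; lia.
case: (ltngtP p k) => [lt|gt|eq].
- apply: ltn_trans (IH hk' lt _) Hs.
  move=> r /andP[h1 h2]; apply: Hr; rewrite h1; lia.
- lia.
- by rewrite (_ : p = Ordinal hk'); last by apply: val_inj.
Qed.

Lemma NF_dom (s : 'S_m) (d : 'I_m -> bool) b (p k : 'I_m) : NF s d -> p < k ->
  (forall r : 'I_m, r <= k -> r != p -> ([set s p; s r] \in Eof s d) = b) -> s p < s k.
Proof.
move=> nf ltpk H.
apply: (NF_chain (b := b) nf ltpk) => r /andP[h1 h2].
case: (ltngtP p r) => [lt|gt|eq].
- rewrite -(H r h2); last by rewrite neq_ltn lt orbT.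
  by rewrite EofP ?neq_ltn ?lt // /maxo lt.
- lia.
- have -> : r = p by apply: val_inj.
  case p0: (val p == 0).
  + have o1 : val (inord 1 : 'I_m) = 1 by apply: inordK.
    have np : (p != inord 1) by rewrite -val_eqE o1 (eqP p0).
    rewrite (nf.1 p (inord 1)) ?(eqP p0) //.
    have le1 : (inord 1 : 'I_m) <= k by rewrite o1; lia.
    rewrite -(H (inord 1) le1); last by rewrite eq_sym.
    rewrite EofP // /maxo.
    by rewrite o1 (eqP p0).
  + have np : (p != ord0) by rewrite -val_eqE /= p0.
    rewrite -(H ord0) //; last by rewrite eq_sym.
    by rewrite EofP // /maxo ltn0.
Qed.

Lemma step_in (s s' : 'S_m) (k : 'I_m) : (forall q : 'I_m, k < q -> s q = s' q) ->
  forall p : 'I_m, p <= k -> exists2 p' : 'I_m, p' <= k & s p = s' p'.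
Proof.
move=> Ha p hp; exists ((s'^-1)%g (s p)); last by rewrite permKV.
rewrite leqNgt; apply/negP => lt.
have := Ha _ lt; rewrite permKV => /perm_inj e.
by move: lt; rewrite e ltnNge hp.
Qed.

Lemma typeclash (s s' : 'S_m) (d d' : 'I_m -> bool) (k : 'I_m) :
  Eof s d = Eof s' d' -> (forall q : 'I_m, k < q -> s q = s' q) ->
  0 < k -> d k -> ~~ d' k -> False.
Proof.
move=> HE Ha k0 dk dk'.
have Ha' : forall q : 'I_m, k < q -> s' q = s q by move=> q /Ha ->.
case: (eqVneq (s k) (s' k)) => [eqk|nek].
- have [p' hp' eo] := step_in Ha (leq0n k : (ord0 : 'I_m) <= k).
  have npk : p' != k.
    apply/eqP => e; move: eo; rewrite e -eqk => /perm_inj e2.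
    by move: k0; rewrite -e2.
  have ko : k != ord0 by rewrite -val_eqE /=; lia.
  have h1 := EofP s d ko; rewrite /maxo ltn0 dk eqk eo HE in h1.
  have h2 := EofP s' d' (npk : p' != k); rewrite /maxo in h2.
  have lt : p' < k by move: npk hp'; rewrite -val_eqE /=; lia.
  by rewrite lt setUC h1 (negbTE dk') in h2.
- have [p hp ep] := step_in Ha' (leqnn k).
  have [p' hp' ep'] := step_in Ha (leqnn k).
  have npk : p != k by apply/eqP => e; move: nek; rewrite ep e eqxx.
  have npk' : p' != k by apply/eqP => e; move: nek; rewrite ep' e eqxx.
  have lt : p < k by move: npk hp; rewrite -val_eqE /=; lia.
  have lt' : p' < k by move: npk' hp'; rewrite -val_eqE /=; lia.
  have h1 := EofP s d (npk : p != k); rewrite /maxo lt in h1.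
  have h2 := EofP s' d' (npk' : p' != k); rewrite /maxo lt' in h2.
  by rewrite ep -ep' -HE setUC h1 dk (negbTE dk') in h2.
Qed.

Lemma order_half (s s' : 'S_m) (d d' : 'I_m -> bool) (k p : 'I_m) :
  NF s d -> Eof s d = Eof s' d' -> (forall q : 'I_m, k < q -> s q = s' q) ->
  p < k -> s' k = s p -> s' k < s k.
Proof.
move=> nf HE Ha ltpk ep; rewrite ep.
apply: (NF_dom (b := d' k) nf ltpk) => r hr nrp.
have [r' hr' er] := step_in Ha hr.
have nrk : k != r'.
  apply/eqP => e; move: er; rewrite -e ep => /perm_inj e2.
  by rewrite e2 eqxx in nrp.
by rewrite -ep er HE EofP // /maxo ltnNge hr'.
Qed.

Lemma NF_inj (s s' : 'S_m) (d d' : 'I_m -> bool) :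
  NF s d -> NF s' d' -> Eof s d = Eof s' d' -> s = s' /\ d =1 d'.
Proof.
move=> nf nf' HE.
have key : forall t (k : 'I_m), m - k <= t -> s k = s' k /\ d k = d' k.
  elim=> [|t IH] k hk; first by have := ltn_ord k; lia.
  have Ha : forall q : 'I_m, k < q -> s q = s' q /\ d q = d' q.
    by move=> q lt; apply: IH; lia.
  have Ha1 : forall q : 'I_m, k < q -> s q = s' q by move=> q /Ha [].
  have Ha2 : forall q : 'I_m, k < q -> s' q = s q by move=> q /Ha [].
  case k0: (val k == 0).
  - split.
      have [p' hp' ep'] := step_in Ha1 (leqnn k).
      rewrite ep'; congr (s' _); apply: val_inj => /=; move: hp' k0; rewrite /=; lia.
    have o1 : val (inord 1 : 'I_m) = 1 by apply: inordK.
    rewrite (nf.1 k (inord 1)) ?(eqP k0) // (nf'.1 k (inord 1)) ?(eqP k0) //.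
    by apply: (Ha _ _).2; rewrite o1 (eqP k0).
  - have kp : 0 < k by rewrite lt0n; move: k0 => /= ->.
    have dk : d k = d' k.
      case E1: (d k); case E2: (d' k) => //; exfalso.
      + by apply: (typeclash HE Ha1 kp); rewrite ?E1 ?E2.
      + by apply: (typeclash (esym HE) Ha2 kp); rewrite ?E1 ?E2.
    split => //.
    case: (eqVneq (s k) (s' k)) => // nek.
    have [p hp ep] := step_in Ha2 (leqnn k).
    have [p' hp' ep'] := step_in Ha1 (leqnn k).
    have npk : p != k by apply/eqP => e; move: nek; rewrite ep e eqxx.
    have npk' : p' != k by apply/eqP => e; move: nek; rewrite ep' e eqxx.
    have lt : p < k by move: npk hp; rewrite -val_eqE /=; lia.
    have lt' : p' < k by move: npk' hp'; rewrite -val_eqE /=; lia.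
    have h1 := order_half nf HE Ha1 lt ep.
    have h2 := order_half nf' (esym HE) Ha2 lt' ep'.
    lia.
split; last by move=> x; apply: (key m x (leq_subr _ _)).2.
by apply/permP => x; apply: (key m x (leq_subr _ _)).1.
Qed.

Lemma maxo_tperm (d : 'I_m -> bool) (i j a b : 'I_m) : val j = (val i).+1 -> d i = d j ->
  a != b -> d (maxo (tperm i j a) (tperm i j b)) = d (maxo a b).
Proof.
move=> hj0 hd nab; rewrite /maxo.
have hj : nat_of_ord j = (nat_of_ord i).+1 := hj0.
have nab' : nat_of_ord a != nat_of_ord b by rewrite val_eqE.
case: tpermP => [ea|ea|na1 na2]; case: tpermP => [eb|eb|nb1 nb2].
all: try subst a; try subst b.
all: try (have na1' : nat_of_ord a != nat_of_ord i by rewrite val_eqE; apply/eqP).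
all: try (have na2' : nat_of_ord a != nat_of_ord j by rewrite val_eqE; apply/eqP).
all: try (have nb1' : nat_of_ord b != nat_of_ord i by rewrite val_eqE; apply/eqP).
all: try (have nb2' : nat_of_ord b != nat_of_ord j by rewrite val_eqE; apply/eqP).
all: repeat case: ifP.
all: move=> *.
all: try first [ by [] | by rewrite hd | by rewrite -hd | (exfalso; lia) | (congr (d _); apply: val_inj => /=; lia)].
Qed.
Lemma Eof_swap (s : 'S_m) (d : 'I_m -> bool) (i j : 'I_m) : val j = (val i).+1 -> d i = d j ->
  Eof (tperm i j * s)%g d = Eof s d.
Proof.
move=> hj hd; apply/setP => e; apply/idP/idP => /mem_Eof [a [b [nab -> da]]].
- rewrite !permM EofP; first by rewrite maxo_tperm.
  by rewrite (inj_eq perm_inj).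
- have -> : s a = (tperm i j * s)%g (tperm i j a) by rewrite permM tpermK.
  have -> : s b = (tperm i j * s)%g (tperm i j b) by rewrite permM tpermK.
  rewrite EofP; first by rewrite maxo_tperm.
  by rewrite (inj_eq perm_inj).
Qed.

Definition W (s : 'S_m) := \sum_(x : 'I_m) x * s x.

Lemma W_swap (s : 'S_m) (i j : 'I_m) : val j = (val i).+1 -> s j < s i ->
  W s < W (tperm i j * s)%g.
Proof.
move=> hj0 lt.
have hj : nat_of_ord j = (nat_of_ord i).+1 := hj0.
have nij : j != i by rewrite -val_eqE /= hj; lia.
set R := \sum_(x | (x != i) && (x != j)) x * s x.
have E1 : W s = i * s i + (j * s j + R).
  by rewrite /W (bigD1 i) //= (bigD1 j).
have E2 : W (tperm i j * s)%g = i * s j + (j * s i + R).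
  rewrite /W (bigD1 i) //= (bigD1 j) //= !permM tpermL tpermR.
  congr (_ + (_ + _)); apply: eq_bigr => x /andP[hx1 hx2].
  by rewrite permM tpermD // eq_sym.
rewrite E1 E2 hj; clear E1 E2.
move: (nat_of_ord i) (nat_of_ord (s i)) (nat_of_ord (s j)) R lt => a b c r h.
nia.
Qed.

Lemma NF_exists (s0 : 'S_m) (d0 : 'I_m -> bool) :
  exists s d, NF s d /\ Eof s d = Eof s0 d0.
Proof.
pose one : 'I_m := inord 1.
have o1 : val one = 1 by apply: inordK.
pose d := fun i : 'I_m => if val i == 0 then d0 one else d0 i.
have Ed : Eof s0 d = Eof s0 d0.
  apply/setP => e; apply/imsetP/imsetP => -[p]; rewrite !inE => /andP[lt dp] ->;
    exists p => //; rewrite inE lt /=; move: dp; rewrite /d;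
    have -> // : (val p.2 == 0) = false by apply/negbTE; rewrite -lt0n; apply: leq_ltn_trans lt.
pose P := fun s : 'S_m => Eof s d == Eof s0 d0.
have P0 : P s0 by rewrite /P Ed.
case: (arg_maxnP W P0) => s Ps Hmax.
exists s, d; split; last exact/eqP.
split.
  move=> i j i0 j1; rewrite /d i0 /= (_ : j = one); last by apply: val_inj; rewrite o1.
  by rewrite o1.
move=> i j hj hd; rewrite ltnNge; apply/negP => le.
have hj' : nat_of_ord j = (nat_of_ord i).+1 := hj.
have nij : s j != s i by rewrite (inj_eq perm_inj) -val_eqE /= hj'; lia.
have lt : s j < s i by rewrite ltn_neqAle nij le.
have := W_swap hj lt.
have := Hmax (tperm i j * s)%g.
rewrite /P Eof_swap // => /(_ Ps). lia.
Qed.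

Definition aA (A : {set 'I_m}) (i : nat) : bool := [exists x in A, val x == i].

Fixpoint DA (a : nat -> bool) (i : nat) : bool :=
  match i with
  | 0 => a 0
  | 1 => a 0
  | S ((S k) as k1) => xorb (DA a k1) (~~ a k1)
  end.

Lemma DA_S a k : DA a k.+2 = xorb (DA a k.+1) (~~ a k.+1).
Proof. by []. Qed.

Definition dA (A : {set 'I_m}) (i : 'I_m) : bool := DA (aA A) (val i).

Lemma ascP (pi : 'S_m) (i j : 'I_m) : val j = (val i).+1 -> i \in Asc pi -> pi i < pi j.
Proof.
move=> hj; rewrite inE => /existsP [j' /andP [/eqP hj' lt]].
by rewrite (_ : j = j') //; apply: val_inj; rewrite hj hj'.
Qed.

Lemma NF_of_P (pi : 'S_m) (A : {set 'I_m}) : Splus pi -> A \subset Asc pi -> NF pi (dA A).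
Proof.
move=> [i0 [j0 [h0 [h1 lt0]]]] sub; split.
  by move=> i j i0' j1; rewrite /dA i0' j1.
move=> i j hj; rewrite /dA hj.
case ei: (val i) => [|k] hd.
  rewrite (_ : i = i0); last by apply: val_inj; rewrite ei h0.
  by rewrite (_ : j = j0) //; apply: val_inj; rewrite hj ei h1.
have ak : aA A k.+1.
  by move: hd; rewrite DA_S; case: (DA (aA A) k.+1); case: (aA A k.+1).
case/existsP: ak => x /andP [xA /eqP xv].
have ex : x = i by apply: val_inj; rewrite xv ei.
apply: ascP; first exact: hj.
by rewrite -ex; apply: (subsetP sub).
Qed.

Lemma last_notin (pi : 'S_m) (A : {set 'I_m}) (x : 'I_m) : A \subset Asc pi -> (val x).+1 = m -> x \notin A.
Proof.
move=> sub hx; apply/negP => /(subsetP sub); rewrite inE => /existsP [j /andP [/eqP hj _]].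
by have := ltn_ord j; rewrite hj hx ltnn.
Qed.

Lemma dA_inj (pi pi' : 'S_m) (A A' : {set 'I_m}) : A \subset Asc pi -> A' \subset Asc pi' ->
  dA A =1 dA A' -> A = A'.
Proof.
move=> sub sub' hd.
have HD : forall k, k < m -> DA (aA A) k = DA (aA A') k.
  by move=> k hk; apply: (hd (Ordinal hk)).
have ha : forall x : 'I_m, aA A x = (x \in A).
  move=> x; apply/existsP/idP => [[y /andP [yA /eqP yv]]|xA].
    by rewrite (_ : x = y) //; apply: val_inj.
  by exists x; rewrite xA eqxx.
have ha' : forall x : 'I_m, aA A' x = (x \in A').
  move=> x; apply/existsP/idP => [[y /andP [yA /eqP yv]]|xA].
    by rewrite (_ : x = y) //; apply: val_inj.
  by exists x; rewrite xA eqxx.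
apply/setP => x; rewrite -ha -ha'.
case ex: (val x) => [|k].
  by have := HD 0 (ltn0Sn _).
case: (ltnP k.+2 m) => hk.
  have e1 := HD k.+1 (ltnW hk); have e2 := HD k.+2 hk.
  move: e2; rewrite !DA_S e1; case: (DA (aA A') k.+1); case: (aA A k.+1); case: (aA A' k.+1) => //.
have lx : val x < m := ltn_ord x.
have hx : (val x).+1 = m by lia.
rewrite -ex ha ha' (negbTE (last_notin sub hx)) (negbTE (last_notin sub' hx)) //.
Qed.

Lemma P_of_NF (s : 'S_m) (d : 'I_m -> bool) : NF s d ->
  exists A : {set 'I_m}, [/\ Splus s, A \subset Asc s & dA A =1 d].
Proof.
move=> nf.
pose Ad := [set i : 'I_m | (i.+1 < m) && (if val i == 0 then d i else d i == d (inord i.+1))].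
have o1 : val (inord 1 : 'I_m) = 1 by apply: inordK.
exists Ad; split.
- exists ord0, (inord 1); split => //.
  split => //. apply: (proj2 nf).
  - by rewrite o1.
  - by apply: nf.1.
- apply/subsetP => x; rewrite inE => /andP [hx hc].
  have ox : val (inord x.+1 : 'I_m) = x.+1 by apply: inordK.
  rewrite inE; apply/existsP; exists (inord x.+1); rewrite ox eqxx /=.
  apply: nf.2 => //.
  move: hc; case: ifP => [x0 hdx|_ /eqP //].
  by apply: nf.1; rewrite ?ox ?(eqP x0).
- have haA : forall k, k < m -> aA Ad k =
     (k.+1 < m) && (if k == 0 then d (inord k) else d (inord k) == d (inord k.+1)).
    move=> k hk; apply/existsP/idP => [[y /andP [yA /eqP yv]]|h].
      by move: yA; rewrite inE -yv inord_val.
    exists (inord k); apply/andP; split; last by rewrite /= inordK.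
    by rewrite inE /= inordK.
  have key : forall k, k < m -> DA (aA Ad) k = d (inord k).
    elim=> [|k IH] hk.
      by rewrite /= haA //=.
    case: k IH hk => [|k] IH hk.
      rewrite /= haA //=; apply: nf.1; by rewrite /= inordK.
    rewrite DA_S IH ?(ltnW hk) // haA ?(ltnW hk) // hk /=.
    by case: (d (inord k.+1)); case: (d (inord k.+2)).
  move=> x; rewrite /dA key; last exact: ltn_ord.
  congr (d _); apply: val_inj; by rewrite /= inordK.
Qed.

Lemma gE_ok (s : 'S_m) (d : 'I_m -> bool) : simple_graph (Eof s d) /\ threshold (Eof s d).
Proof.
split; last by exists s, d.
move=> e /mem_Eof [a [b [nab -> _]]].
by rewrite cards2 (inj_eq perm_inj) nab.
Qed.

Definition g (p : Pn m) : threshold_graph m :=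
  exist _ (Eof (sval p).1 (dA (sval p).2)) (gE_ok _ _).

Lemma sig_irr (T : Type) (P : T -> Prop) (x y : {a : T | P a}) : sval x = sval y -> x = y.
Proof.
case: x => x px; case: y => y py /= exy; subst y.
by rewrite (proof_irrelevance _ px py).
Qed.

Lemma g_inj : injective g.
Proof.
move=> [[pi A] [hs hA]] [[pi' A'] [hs' hA']] /(congr1 sval) /= HE.
have [ep ed] := NF_inj (NF_of_P hs hA) (NF_of_P hs' hA') HE; simpl in ep.
have eA := dA_inj hA hA' ed; simpl in eA.
by apply: sig_irr => /=; rewrite ep eA.
Qed.

Lemma g_surj (t : threshold_graph m) : exists p, g p = t.
Proof.
case: t => E [hsim [s0 [d0 hE]]].
have [s [d [nf Es]]] := NF_exists s0 d0.
have [A [hs hA hd]] := P_of_NF nf.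
exists (exist _ (s, A) (conj hs hA)); apply: sig_irr => /=.
have -> : dA A = d by apply: functional_extensionality.
by rewrite Es hE.
Qed.

End S.

Theorem proposition5 (n : nat) (hn : 2 <= n) :
  exists f : threshold_graph n -> Pn n, bijective f.
Proof.
case: n hn => [|[|n]] // _.
pose f t := proj1_sig (constructive_indefinite_description _ (@g_surj n t)).
have fK : forall t, g (f t) = t.
  by move=> t; rewrite /f; case: constructive_indefinite_description.
exists f; exists (@g n) => // p.
by apply: (@g_inj n); rewrite fK.
Qed.
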